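(* If $G$ is a connected cubic graph with $n$ vertices, then $rc(L^2(G))\leq n+1$.
   Context: All graphs are simple, finite and undirected. $L(G)$ is the line graph of $G$ and $L^2(G)=L(L(G))$ is the iterated line graph. For an edge-colouring of a graph (adjacent edges may receive the same colour), a path is rainbow if no two of its edges have the same colour; the graph is rainbow connected if every two vertices are joined by a rainbow path. The rainbow connection number $rc(H)$ of a connected graph $H$ is the smallest number of colours in an edge-colouring making $H$ rainbow connected. *)

(* Defs.v *)
From mathcomp Require Import all_boot.
Set Implicit Arguments. Unset Strict Implicit. Unset Printing Implicit Defensive.

Definition simple_graph (T : finType) (e : rel T) : Prop :=
  symmetric e /\ irreflexive e.

Definition connected_graph (T : finType) (e : rel T) : Prop :=
  forall x y : T, connect e x y.

Definition cubic (T : finType) (e : rel T) : Prop :=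
  forall x : T, #|[set y | e x y]| = 3.

Definition is_edge (T : finType) (e : rel T) (A : {set T}) : bool :=
  [exists x, exists y, e x y && (A == [set x; y])].

(* Vertex type of the line graph L(G): the edges of G. *)
Definition LV (T : finType) (e : rel T) : finType :=
  {A : {set T} | is_edge e A}.

Definition Ladj (T : finType) (e : rel T) : rel (LV e) :=
  fun A B => (A != B) && ~~ [disjoint val A & val B].

Definition L2V (T : finType) (e : rel T) : finType := @LV (LV e) (@Ladj T e).
Definition L2adj (T : finType) (e : rel T) : rel (L2V e) := @Ladj (LV e) (@Ladj T e).

(* An edge-colouring with (at most) k colours: the colour of edge uv is
   c [set u; v] (values on non-edges are irrelevant). *)
Definition edge_colours (V : finType) (k : nat) (c : {set V} -> 'I_k)
    (x : V) (p : seq V) : seq 'I_k :=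
  [seq c [set uv.1; uv.2] | uv <- zip (x :: p) p].

Definition rainbow_path (V : finType) (adj : rel V) (k : nat)
    (c : {set V} -> 'I_k) (x y : V) (p : seq V) : bool :=
  [&& path adj x p, last x p == y, uniq (x :: p) & uniq (edge_colours c x p)].

Definition rainbow_connected (V : finType) (adj : rel V) (k : nat)
    (c : {set V} -> 'I_k) : Prop :=
  forall x y : V, exists p : seq V, rainbow_path adj c x y p.

Definition rc_le (V : finType) (adj : rel V) (k : nat) : Prop :=
  exists c : {set V} -> 'I_k, rainbow_connected adj c.

(* Main.v *)
Require Import Defs.
From mathcomp Require Import all_boot.
Set Implicit Arguments. Unset Strict Implicit. Unset Printing Implicit Defensive.

Lemma ndisjP (U : finType) (A B : {set U}) :
  reflect (exists x, x \in A /\ x \in B) (~~ [disjoint A & B]).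
Proof.
rewrite -setI_eq0; apply: (iffP (set0Pn _)) => [[x]|[x [xA xB]]].
  by rewrite inE => /andP[]; exists x.
by exists x; rewrite inE xA xB.
Qed.

Lemma two_set (U : finType) (x y v w : U) :
  x != y -> v != w -> v \in [set x; y] -> w \in [set x; y] ->
  [set x; y] = [set v; w].
Proof.
move=> xy vw vin win; apply/eqP; rewrite eq_sym eqEcard !cards2 xy vw leqnn andbT.
apply/subsetP => z; rewrite in_set2 => /orP[]/eqP-> //.
Qed.


Section Gen.
Variables (U : finType) (f : rel U).
Hypothesis firr : irreflexive f.

Lemma edgeP (t : LV f) : exists x y, [/\ f x y, x != y & val t = [set x; y]].
Proof.
have /existsP[x /existsP[y /andP[fxy /eqP E]]] := valP t.
exists x, y; split=> //; by apply: contraTneq fxy => ->; rewrite firr.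
Qed.

Lemma edge_eq (t1 t2 : LV f) v w : v != w -> v \in val t1 -> w \in val t1 ->
  v \in val t2 -> w \in val t2 -> t1 = t2.
Proof.
move=> vw v1 w1 v2 w2; apply: val_inj.
have [x1 [y1 [_ xy1 E1]]] := edgeP t1; have [x2 [y2 [_ xy2 E2]]] := edgeP t2.
rewrite E1 in v1 w1 *; rewrite E2 in v2 w2 *.
by rewrite (two_set xy1 vw v1 w1) (two_set xy2 vw v2 w2).
Qed.

Lemma is_edge2 x y : f x y -> is_edge f [set x; y].
Proof. by move=> fxy; apply/existsP; exists x; apply/existsP; exists y; rewrite fxy eqxx. Qed.

Definition mkE (d : LV f) x y : LV f := insubd d [set x; y].

Lemma valE d x y : f x y -> val (mkE d x y) = [set x; y].
Proof. by move=> fxy; rewrite /mkE insubdK //; apply: is_edge2. Qed.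

Lemma mem_edge2 (t : LV f) : #|val t| = 2.
Proof. by have [x [y [_ xy ->]]] := edgeP t; rewrite cards2 xy. Qed.

End Gen.

Lemma Ladj_irr (U : finType) (f : rel U) : irreflexive (@Ladj _ f).
Proof. by move=> A; rewrite /Ladj eqxx. Qed.

Lemma Ladj_sym (U : finType) (f : rel U) : symmetric (@Ladj _ f).
Proof. by move=> A B; rewrite /Ladj eq_sym disjoint_sym. Qed.

Section RB.
Variables (V : finType) (adj : rel V) (k : nat) (c : {set V} -> 'I_k).

Lemma ec_cons x a p : edge_colours c x (a :: p) = c [set x; a] :: edge_colours c a p.
Proof. by []. Qed.

Lemma ec_cat x p q : edge_colours c x (p ++ q) = edge_colours c x p ++ edge_colours c (last x p) q.
Proof. by elim: p x => [|a p IH] x //=; rewrite !ec_cons IH. Qed.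

Lemma rb_cat x y z p q : rainbow_path adj c x y p -> rainbow_path adj c y z q ->
  (forall u, u \in x :: p -> u \in q -> False) ->
  (forall k0, k0 \in edge_colours c x p -> k0 \in edge_colours c y q -> False) ->
  rainbow_path adj c x z (p ++ q).
Proof.
move=> /and4P[pp /eqP lp up cp] /and4P[pq /eqP lq uq cq] dv dc; apply/and4P; split.
- by rewrite cat_path pp lp pq.
- by rewrite last_cat lp lq.
- rewrite -cat_cons cat_uniq up /=; move: uq; rewrite cons_uniq => /andP[_ ->].
  by rewrite andbT; apply/hasP => [[u uq ux]]; apply: (dv u).
- rewrite ec_cat lp cat_uniq cp cq andbT; apply/hasP => [[k0 k1 k2]]; exact: (dc k0).
Qed.

Lemma rb_single x y : adj x y -> x != y -> rainbow_path adj c x y [:: y].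
Proof. by move=> xy nxy; rewrite /rainbow_path /= xy eqxx inE nxy. Qed.

Lemma rb_nil x : rainbow_path adj c x x [::].
Proof. by rewrite /rainbow_path /= eqxx. Qed.

End RB.

Section Tree.
Variables (T : finType) (e : rel T).
Hypotheses (esym : symmetric e) (eirr : irreflexive e) (econn : connected_graph e).
Variable r : T.

Definition dpred (x : T) : pred nat :=
  fun n => [exists p : n.-tuple T, path e r p && (last r p == x)].

Lemma dex x : exists n, dpred x n.
Proof.
have /connectP[p pp ->] := econn r x.
by exists (size p); apply/existsP; exists (in_tuple p); rewrite pp eqxx.
Qed.

Definition dist x := ex_minn (dex x).

Lemma dist_r : dist r = 0.
Proof.
rewrite /dist; case: ex_minnP => m _ H; apply/eqP; rewrite -leqn0; apply: H.
by apply/existsP; exists [tuple]; rewrite /= eqxx.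
Qed.

Lemma dist0 x : dist x = 0 -> x = r.
Proof.
rewrite /dist; case: ex_minnP => m /existsP[p /andP[_ /eqP <-]] _ m0.
move: p; rewrite m0 => p; by rewrite tuple0.
Qed.

Lemma dist_step x : x != r -> exists y, e x y && (dist y < dist x).
Proof.
move=> xr; rewrite {2}/dist; case: ex_minnP => m /existsP[p /andP[pp /eqP px]] _.
have sp := size_tuple p; move: (tval p) pp px sp => {}p pp px sp.
case/lastP: p pp px sp => [|s z] pp px sp.
  by move: px xr => /= ->; rewrite eqxx.
move: pp px; rewrite rcons_path last_rcons => /andP[ps' ez] zx.
exists (last r s); rewrite -zx esym ez /=.
rewrite /dist; case: ex_minnP => k _ /(_ (size s)) H.
have: size s < m by rewrite -sp size_rcons.
apply: leq_ltn_trans; apply: H.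
by apply/existsP; exists (in_tuple s); rewrite ps' eqxx.
Qed.

Definition par x := if x == r then r else odflt r [pick y | e x y && (dist y < dist x)].

Lemma par_r : par r = r.
Proof. by rewrite /par eqxx. Qed.

Lemma par_spec x : x != r -> e x (par x) /\ dist (par x) < dist x.
Proof.
move=> xr; rewrite /par (negbTE xr); case: pickP => [y /andP[]//|H].
by case: (dist_step xr) => y; rewrite H.
Qed.

Lemma iter_dist i x : iter i par x = x \/ dist (iter i par x) < dist x.
Proof.
elim: i => [|i [IH|IH]] /=; first by left.
  rewrite IH; case: (eqVneq x r) => [->|xr]; first by rewrite par_r; left.
  by right; case: (par_spec xr).
case: (eqVneq (iter i par x) r) => [E|xr]; first by rewrite E par_r; right; rewrite -E.
by right; case: (par_spec xr) => _ H; apply: ltn_trans H IH.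
Qed.

Definition anc x y := exists i, iter i par x = y.

Lemma anc_dist x y : anc x y -> y = x \/ dist y < dist x.
Proof. by case=> i <-; apply: iter_dist. Qed.

Definition tedge x y := ((x != r) && (par x == y)) || ((y != r) && (par y == x)).

Lemma tedge_e x y : tedge x y -> e x y.
Proof.
case/orP=> /andP[xr /eqP <-]; first by case: (par_spec xr).
by rewrite esym; case: (par_spec xr).
Qed.

Fixpoint consec (q : seq T) (a b : T) : bool :=
  if q is x :: q' then
    (if q' is y :: _ then ((x == a) && (y == b)) || consec q' a b else false)
  else false.

Lemma consec2 x y q a b :
  consec (x :: y :: q) a b = ((x == a) && (y == b)) || consec (y :: q) a b.
Proof. by []. Qed.

Lemma consec_mem q a b : consec q a b -> (a \in q) && (b \in q).
Proof.
elim: q => [|x [|y q] IH]; [by []|by []|]; rewrite consec2 => /orP[/andP[/eqP-> /eqP->]|/IH /andP[aq bq]].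
  by rewrite !inE !eqxx orbT.
by rewrite !inE in aq bq *; rewrite aq bq !orbT.
Qed.

Lemma consec_tedge x q a b : path tedge x q -> consec (x :: q) a b -> tedge a b.
Proof.
elim: q x => [|y q IH] x; first by [].
rewrite consec2 /= => /andP[xy pq] /orP[/andP[/eqP<- /eqP<-]//|].
exact: IH.
Qed.

Lemma consec_head x y q a b : uniq (x :: y :: q) -> consec (x :: y :: q) a b ->
  (a == x) || (b == x) -> (a == x) && (b == y).
Proof.
move=> u; rewrite consec2 => /orP[/andP[/eqP-> /eqP->]|]; first by rewrite !eqxx.
move=> /consec_mem /andP[ay bY] /orP[]/eqP E; subst;
  by move: u; rewrite /= ?ay ?bY ?orbT.
Qed.

Lemma consec_last x y q a b : uniq (x :: y :: q) -> consec (x :: y :: q) a b ->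
  (a == last y q) || (b == last y q) -> (a == last x (belast y q)) && (b == last y q).
Proof.
elim: q x y => [|z q IH] x y u.
  by rewrite /= orbF => /andP[/eqP-> /eqP->]; rewrite !eqxx.
rewrite consec2 => /orP[/andP[/eqP ax /eqP bY]|C].
  subst a b; have lz : last z q \in z :: q by apply: mem_last.
  have xq : x \notin z :: q.
    by move: u; rewrite cons_uniq => /andP[+ _]; apply: contra => H; rewrite inE H orbT.
  have yq : y \notin z :: q.
    by move: u; rewrite cons_uniq => /andP[_]; rewrite cons_uniq => /andP[].
  by rewrite /= => /orP[]/eqP E; rewrite -E ?(negbTE xq) ?(negbTE yq) in lz.
move=> H; have := IH y z _ C H; apply.
by move: u; rewrite cons_uniq => /andP[].
Qed.

Lemma path_last_tedge x y q : path tedge x (y :: q) -> tedge (last x (belast y q)) (last y q).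
Proof.
by rewrite (lastI y q) rcons_path => /andP[_].
Qed.

Fixpoint walk (k : nat) (v w : T) : seq T :=
  if k is k'.+1 then
    (if v == w then [::] else if dist w <= dist v then par v :: walk k' (par v) w
     else rcons (walk k' v (par w)) w)
  else [::].

Lemma walk_spec k v w : dist v + dist w < k ->
  let p := walk k v w in
  [/\ path tedge v p, last v p = w, uniq (v :: p) &
      forall y, y \in v :: p -> anc v y \/ anc w y].
Proof.
elim: k v w => [//|k IH] v w /= H.
case: (eqVneq v w) => [<-|vw].
  split=> // y; rewrite inE => /eqP->; left; by exists 0.
case: leqP => [wv|vw'].
  have vr : v != r.
    apply: contraNneq vw => vr; move: wv; rewrite vr dist_r leqn0 => /eqP/dist0 ->//.
  have [evp dp] := par_spec vr.
  have /IH[p1 p2 p3 p4] : dist (par v) + dist w < k.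
    by rewrite -ltnS (leq_trans _ H) // ltnS ltn_add2r.
  split.
  - by rewrite /= p1 /tedge vr eqxx.
  - by [].
  - rewrite cons_uniq; apply/andP; split; last exact: p3. apply/negP => /p4 [[i]|]; last first.
      case/anc_dist => [yw|]; first by rewrite yw eqxx in vw.
      by rewrite ltnNge wv.
    move=> Hi; case: (iter_dist i (par v)) => D; rewrite Hi in D.
      by move: dp; rewrite -D ltnn.
    by move: (ltn_trans dp D); rewrite ltnn.
  - move=> y; rewrite inE => /orP[/eqP->|/p4[[i <-]|]].
    + by left; exists 0.
    + by left; exists i.+1; rewrite iterSr.
    + by right.
have wr : w != r.
  by apply: contraTneq vw' => ->; rewrite dist_r.
have [ewp dp] := par_spec wr.
have /IH[p1 p2 p3 p4] : dist v + dist (par w) < k.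
  by rewrite -ltnS (leq_trans _ H) // ltnS ltn_add2l.
have wnot : w \notin v :: walk k v (par w).
  apply/negP => /p4 [|].
    case/anc_dist => [yw|]; first by rewrite yw eqxx in vw.
    by move=> /(ltn_trans vw'); rewrite ltnn.
  case/anc_dist => [E|]; first by move: dp; rewrite -E ltnn.
  by move=> /(ltn_trans dp); rewrite ltnn.
split.
- by rewrite rcons_path p1 p2 /tedge wr eqxx orbT.
- by rewrite last_rcons.
- change (uniq (v :: rcons (walk k v (par w)) w)); rewrite -rcons_cons rcons_uniq wnot; exact: p3.
- move=> y; rewrite -rcons_cons mem_rcons inE => /orP[/eqP->|/p4[|[i <-]]].
  + by right; exists 0.
  + by left.
  + by right; exists i.+1; rewrite iterSr.
Qed.

Lemma walk_vv k v : walk k v v = [::].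
Proof. by case: k => //= k; rewrite eqxx. Qed.

Lemma walk_single k v w : v != w -> tedge v w -> walk k.+1 v w = [:: w].
Proof.
move=> vw /= ; rewrite (negbTE vw) => /orP[/andP[vr /eqP pv]|/andP[wr /eqP pw]].
  have [_ dp] := par_spec vr; rewrite pv in dp.
  by rewrite (ltnW dp) pv walk_vv.
have [_ dp] := par_spec wr; rewrite pw in dp.
by rewrite leqNgt dp /= pw walk_vv.
Qed.


Hypothesis ecub : cubic e.
Local Notation D := (LV e).
Local Notation V2 := (L2V e).
Variable d0 : D.
Variable D0 : V2.

Fact E_key : unit. Proof. exact: tt. Qed.
Definition E x y : D := locked_with E_key (mkE d0 x y).

Lemma E_val x y : e x y -> val (E x y) = [set x; y].
Proof. by move=> exy; rewrite /E locked_withE valE. Qed.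

Lemma mem_E x y z : e x y -> (z \in val (E x y)) = (z == x) || (z == y).
Proof. by move=> exy; rewrite E_val // in_set2. Qed.

Lemma Ladj_common (A B : D) : @Ladj _ e A B -> exists v, v \in val A /\ v \in val B.
Proof. by case/andP=> _ /ndisjP. Qed.

Fact center_key : unit. Proof. exact: tt. Qed.
Definition center (X : V2) : T := locked_with center_key (odflt r [pick v | [forall A in val X, v \in val A]]).

Lemma center_spec (X : V2) A : A \in val X -> center X \in val A.
Proof.
have [A' [B' [ab _ EX]]] := edgeP (@Ladj_irr _ e) X.
have [v [vA vB]] := Ladj_common ab.
rewrite /center locked_withE; case: pickP => [u /forall_inP H|H]; first by apply: H.
move: (H v) => /negP[]; apply/forall_inP => C; rewrite EX in_set2.
by case/orP=> /eqP->.
Qed.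

Lemma center_eq (X : V2) v (A B : D) : A \in val X -> B \in val X -> A != B ->
  v \in val A -> v \in val B -> center X = v.
Proof.
move=> AX BX AB vA vB; apply/eqP/negP => /negP cv; move/negP: AB; apply.
by apply/eqP; apply: (edge_eq eirr cv) => //; apply: center_spec.
Qed.

Definition Ev v := [set t : D | v \in val t].

Lemma Ev_other (t : D) v : v \in val t -> exists o, e v o /\ val t = [set v; o].
Proof.
have [x [y [exy _ ->]]] := edgeP eirr t; rewrite in_set2 => /orP[]/eqP->.
  by exists y.
by exists x; rewrite setUC esym.
Qed.

Lemma card_Ev v : #|Ev v| <= 3.
Proof.
pose g (t : D) := odflt v [pick y | (y \in val t) && (y != v)].
have gP t : t \in Ev v -> e v (g t) /\ val t = [set v; g t].
  rewrite inE => /Ev_other [o [evo Et]].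
  have ov : o != v by apply: contraTneq evo => ->; rewrite eirr.
  rewrite /g; case: pickP => [y /andP[]|H].
    by rewrite Et in_set2 => /orP[/eqP->|/eqP->]; [rewrite eqxx|].
  by move: (H o); rewrite Et in_set2 eqxx orbT ov.
rewrite -(ecub v) -(card_in_imset (f := g)).
  apply: subset_leq_card; apply/subsetP => y /imsetP[t tE ->].
  by rewrite inE; case: (gP t tE).
move=> t1 t2 t1E t2E gg; apply: val_inj.
by case: (gP t1 t1E) => _ ->; case: (gP t2 t2E) => _ ->; rewrite gg.
Qed.


Definition treeb (t : D) := [exists x, (x != r) && (val t == [set x; par x])].
Definition child (t : D) := odflt r [pick x | (x != r) && (val t == [set x; par x])].
Local Notation n := #|T|.
Definition col (t : D) : 'I_n.+1 := widen_ord (leqnSn n) (enum_rank (child t)).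
Definition E1 : 'I_n.+1 := widen_ord (leqnSn n) (enum_rank r).
Definition E2 : 'I_n.+1 := ord_max.
Definition extra v (s : D) : 'I_n.+1 :=
  if [exists t : D, [&& v \in val t, ~~ treeb t, t != s & (enum_rank t < enum_rank s)]]
  then E2 else E1.
Definition kappa v (s : D) := if treeb s then col s else extra v s.
Definition colr (Z : {set V2}) : 'I_n.+1 :=
  match [pick q : V2 * V2 * D | [&& q.1.1 \in Z, q.1.2 \in Z, q.1.1 != q.1.2,
          q.2 \in val q.1.1 & q.2 \in val q.1.2]] with
  | Some q => kappa (center q.1.1) q.2
  | None => E1
  end.

Lemma child_spec t : treeb t -> child t != r /\ val t = [set child t; par (child t)].
Proof.
move=> /existsP[x /andP[xr /eqP Ex]]; rewrite /child; case: pickP => [y /andP[yr /eqP ->]|H] //.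
by move: (H x); rewrite xr Ex eqxx.
Qed.

Lemma col_inj t1 t2 : treeb t1 -> treeb t2 -> col t1 = col t2 -> t1 = t2.
Proof.
move=> T1 T2 /(congr1 val) /= /ord_inj /enum_rank_inj cc; apply: val_inj.
by case: (child_spec T1) => _ ->; case: (child_spec T2) => _ ->; rewrite cc.
Qed.

Lemma col_E1 t : treeb t -> col t != E1.
Proof.
move=> Tt; apply/negP => /eqP /(congr1 val) /= /ord_inj /enum_rank_inj cr.
by case: (child_spec Tt); rewrite cr eqxx.
Qed.

Lemma col_E2 t : col t != E2.
Proof. by rewrite -val_eqE /= neq_ltn ltn_ord. Qed.

Lemma E12 : E1 != E2.
Proof. by rewrite -val_eqE /= neq_ltn ltn_ord. Qed.

Lemma tedge_tree a b : tedge a b -> treeb (E a b).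
Proof.
move=> tab; have eab := tedge_e tab; apply/existsP; rewrite E_val //.
case/orP: tab => /andP[xr /eqP <-]; first by exists a; rewrite xr eqxx.
by exists b; rewrite xr setUC eqxx.
Qed.

Lemma tree_tedge t a b : treeb t -> a != b -> a \in val t -> b \in val t -> tedge a b.
Proof.
move=> /child_spec [cr ->] ab; rewrite !in_set2 /tedge.
move=> /orP[]/eqP aE /orP[]/eqP bE; subst a b; move: ab; rewrite ?eqxx ?cr ?orbT //.
Qed.

Lemma common_unique (X Y : V2) s s' : X != Y -> s \in val X -> s \in val Y ->
  s' \in val X -> s' \in val Y -> s = s'.
Proof.
move=> XY sX sY s'X s'Y; apply/eqP/negP => /negP ss; move/negP: XY; apply.
by apply/eqP; apply: (edge_eq (@Ladj_irr _ e) ss).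
Qed.

Lemma colr_edge (X Y : V2) s : X != Y -> s \in val X -> s \in val Y ->
  treeb s \/ center X = center Y -> colr [set X; Y] = kappa (center X) s.
Proof.
move=> XY sX sY H; rewrite /colr; case: pickP => [[[X' Y'] s'] /= | H'].
  move=> /and5P[X'in Y'in XY' s'X s'Y].
  have [[EX EY]|[EX EY]] : (X' = X /\ Y' = Y) \/ (X' = Y /\ Y' = X).
    move: X'in Y'in XY'; rewrite !in_set2.
    by move=> /orP[]/eqP-> /orP[]/eqP->; rewrite ?eqxx //; [left|right].
    subst X' Y'; by rewrite (common_unique XY s'X s'Y sX sY).
  subst X' Y'; have YX : Y != X by rewrite eq_sym.
  rewrite (common_unique YX s'X s'Y sY sX).
  by case: H => [Ts|->]; rewrite // /kappa Ts.
by move: (H' (X, Y, s)); rewrite /= !in_set2 !eqxx XY sX sY /= orbT.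
Qed.

Lemma same_center_adj (X Y : V2) : center X = center Y -> X != Y -> @L2adj _ e X Y.
Proof.
move=> cXY XY; rewrite /L2adj /Ladj XY /=; apply/negP => dis.
have sub : val X :|: val Y \subset Ev (center Y).
  apply/subsetP => A /setUP[] AX; rewrite inE; last exact: center_spec.
  by rewrite -cXY; apply: center_spec.
have := subset_leq_card sub; rewrite cardsU (disjoint_setI0 dis) cards0 subn0.
rewrite !(mem_edge2 (@Ladj_irr _ e)) => H; by move: (leq_trans H (card_Ev _)).
Qed.

Lemma Ev3 v (a b h : D) : v \in val a -> v \in val b -> v \in val h ->
  a != b -> a != h -> b != h -> forall t : D, v \in val t -> t \in [set a; b; h].
Proof.
move=> va vb vh ab ah bh t vt.
have sub : [set a; b; h] \subset Ev v.
  by apply/subsetP => x; rewrite !inE -orbA => /or3P[]/eqP->.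
have : [set a; b; h] == Ev v.
  rewrite eqEcard sub (leq_trans (card_Ev v)) //.
  rewrite [[set a; b; h]]setUC cardsU1 cards2 ab.
  by rewrite !inE negb_or (eq_sym h) ah (eq_sym h) bh.
by move/eqP->; rewrite inE.
Qed.

Lemma extra_two v (a b h : D) : v \in val a -> v \in val b -> v \in val h ->
  a != b -> a != h -> b != h -> treeb h -> ~~ treeb a -> ~~ treeb b ->
  extra v a != extra v b.
Proof.
move=> va vb vh ab ah bh Th Ta Tb.
have key x y : x \in [set a; b] -> y \in [set a; b] -> x != y ->
  [exists t : D, [&& v \in val t, ~~ treeb t, t != x & (enum_rank t < enum_rank x)]]
  = (enum_rank y < enum_rank x).
  move=> xab yab xy; apply/existsP/idP => [[t /and4P[vt Tt tx lt]]|lt].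
    move: (Ev3 va vb vh ab ah bh vt); rewrite !inE -orbA => /or3P[]/eqP tE; subst t.
    - by move: xab yab xy tx lt; rewrite !in_set2 => /orP[]/eqP-> /orP[]/eqP->; rewrite ?eqxx.
    - by move: xab yab xy tx lt; rewrite !in_set2 => /orP[]/eqP-> /orP[]/eqP->; rewrite ?eqxx.
    - by rewrite Th in Tt.
  exists y; rewrite lt andbT (eq_sym y) xy.
  move: yab; rewrite in_set2 => /orP[]/eqP->; by rewrite ?va ?vb ?Ta ?Tb.
have ba : b != a by rewrite eq_sym.
rewrite /extra (key a b) ?(key b a) ?in_set2 ?eqxx ?orbT //.
case: ltngtP => [_|_|/ord_inj/enum_rank_inj ba']; first by rewrite eq_sym E12.
  by rewrite E12.
by rewrite ba' eqxx in ab.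
Qed.


Local Notation L2 := (@L2adj T e).
Fact P2_key : unit. Proof. exact: tt. Qed.
Definition P2 (A B : D) : V2 := locked_with P2_key (mkE D0 A B).

Lemma valP2 A B : @Ladj _ e A B -> val (P2 A B) = [set A; B].
Proof. by rewrite /P2 locked_withE; apply: valE. Qed.

Lemma L2adjP (X Y : V2) s : X != Y -> s \in val X -> s \in val Y -> L2 X Y.
Proof. by move=> XY sX sY; rewrite /L2adj /Ladj XY /=; apply/ndisjP; exists s. Qed.

Lemma LadjP (A B : D) v : A != B -> v \in val A -> v \in val B -> @Ladj _ e A B.
Proof. by move=> AB vA vB; rewrite /Ladj AB /=; apply/ndisjP; exists v. Qed.

Lemma E_in1 a b : e a b -> a \in val (E a b).
Proof. by move=> eab; rewrite mem_E // eqxx. Qed.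

Lemma E_in2 a b : e a b -> b \in val (E a b).
Proof. by move=> eab; rewrite mem_E // eqxx orbT. Qed.

Lemma through q : forall v0 v1 (S F : V2), path tedge v0 (v1 :: q) ->
  uniq (v0 :: v1 :: q) -> E v0 v1 \in val S -> center S = v0 ->
  E (last v0 (belast v1 q)) (last v1 q) \in val F -> center F = last v1 q ->
  exists p, [/\ rainbow_path L2 colr S F p,
    (forall y, y \in p -> center y \in v1 :: q),
    (forall y, y \in S :: p -> center y = last v1 q -> y = F) &
    (forall k, k \in edge_colours colr S p ->
       exists a b, k = col (E a b) /\ consec (v0 :: v1 :: q) a b)].
Proof.
elim: q => [|v2 q IH] v0 v1 S F pt u hS cS hF cF.
  rewrite /= in hF cF *.
  have t01 : tedge v0 v1 by case/andP: pt.
  have v01 : v0 != v1 by move: u; rewrite /= inE andbT.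
  have SF : S != F by apply: contraNneq v01 => SF; rewrite -cS SF cF.
  exists [:: F]; split.
  - by apply: rb_single => //; apply: (L2adjP SF hS hF).
  - by move=> y; rewrite inE => /eqP->; rewrite cF inE.
  - move=> y; rewrite !inE => /orP[]/eqP-> // cy.
    by rewrite -cS cy eqxx in v01.
  - move=> k; rewrite ec_cons inE => /eqP->; exists v0, v1; split; last by rewrite /= !eqxx.
    have Tt := tedge_tree t01.
    by rewrite (colr_edge SF hS hF); [rewrite /kappa Tt|left].
have hF' : E (last v1 (belast v2 q)) (last v2 q) \in val F := hF.
have cF' : center F = last v2 q := cF.
have t01 : tedge v0 v1 by case/andP: pt.
have pt' : path tedge v1 (v2 :: q) by case/andP: pt.
have e01 := tedge_e t01.
have t12 : tedge v1 v2 by case/andP: pt'.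
have e12 := tedge_e t12.
have u' : uniq (v1 :: v2 :: q) by case/andP: u.
have v0n : v0 \notin v1 :: v2 :: q by case/andP: u.
have v1n : v1 \notin v2 :: q by case/andP: u'.
move: (v0n); rewrite !inE !negb_or => /and3P[v01 v02 v0q].
move: (v1n); rewrite !inE negb_or => /andP[v12 v1q].
have Ladj12 : @Ladj _ e (E v0 v1) (E v1 v2).
  apply: (LadjP (v := v1)); [|exact: E_in2 e01|exact: E_in1 e12].
  by apply/negP => /eqP E01; move: (E_in1 e01); rewrite E01 mem_E // (negbTE v01) (negbTE v02).
set S' := P2 (E v0 v1) (E v1 v2).
have hS' : E v1 v2 \in val S' by rewrite valP2 // in_set2 eqxx orbT.
have h1S' : E v0 v1 \in val S' by rewrite valP2 // in_set2 eqxx.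
have cS' : center S' = v1.
  apply: (center_eq (A := E v0 v1) (B := E v1 v2)); rewrite ?valP2 ?in_set2 ?eqxx ?orbT //.
    by case/andP: Ladj12.
  by rewrite E_in2. by rewrite E_in1.
have [p [rp pc pF pcol]] := IH v1 v2 S' F pt' u' hS' cS' hF' cF'.
have SS' : S != S' by apply: contraNneq v01 => SS'; rewrite -cS SS' cS'.
exists (S' :: p); split.
- rewrite -cat1s; apply: (rb_cat _ rp).
  + by apply: rb_single => //; apply: (L2adjP SS' hS h1S').
  + move=> y; rewrite !inE => /orP[]/eqP-> /pc; rewrite ?cS ?cS' inE.
      by rewrite (negbTE v02) (negbTE v0q).
    by rewrite (negbTE v12) (negbTE v1q).
  + move=> k0; rewrite ec_cons inE => /eqP-> /pcol [a [b [kab cab]]].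
    rewrite (colr_edge SS' hS h1S') in kab; last by left; apply: tedge_tree.
    rewrite /kappa tedge_tree // in kab.
    have tab := consec_tedge pt' cab.
    move/(col_inj (tedge_tree t01) (tedge_tree tab)): kab => Eab.
    have [aq bq] : a \in v1 :: v2 :: q /\ b \in v1 :: v2 :: q by case/andP: (consec_mem cab).
    move: (E_in1 e01); rewrite Eab mem_E; last exact: tedge_e.
    move/orP => [/eqP Ea|/eqP Eb]; [move: aq|move: bq]; rewrite -?Ea -?Eb;
      by rewrite (negbTE v0n).
- move=> y; rewrite inE => /orP[/eqP->|/pc]; first by rewrite cS' inE eqxx.
  by move=> H; rewrite inE H orbT.
- move=> y; rewrite inE => /orP[/eqP-> cy|]; last exact: pF.
  rewrite /= cS in cy; have : last v2 q \in v2 :: q by apply: mem_last.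
  by rewrite -cy inE (negbTE v02) (negbTE v0q).
- move=> k; rewrite ec_cons inE => /orP[/eqP->|/pcol [a [b [kab cab]]]].
    exists v0, v1; rewrite consec2 !eqxx; split=> //.
    have Tt := tedge_tree t01.
    by rewrite (colr_edge SS' hS h1S'); [rewrite /kappa Tt|left].
  by exists a, b; rewrite consec2 cab orbT.
Qed.


Lemma pre_piece (X : V2) (h : D) (K0 : 'I_n.+1) : center X \in val h -> treeb h ->
  (K0 = E1 \/ K0 = E2) ->
  exists S KS, [/\ center S = center X, h \in val S,
    (S = X \/ [/\ L2 X S, X != S & colr [set X; S] = KS]) &
    ((exists s, [/\ treeb s, center X \in val s, s != h & KS = col s]) \/ KS = K0)].
Proof.
move=> vh Th HK0.
case hX: (h \in val X).
  by exists X, K0; split => //; [left|right].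
have [a [b [Lab ab EX]]] := edgeP (@Ladj_irr _ e) X.
set v := center X in vh *.
have aX : a \in val X by rewrite EX in_set2 eqxx.
have bX : b \in val X by rewrite EX in_set2 eqxx orbT.
have va := center_spec aX; have vb := center_spec bX.
have ha : h != a by apply/negP => /eqP E0; rewrite E0 aX in hX.
have hb : h != b by apply/negP => /eqP E0; rewrite E0 bX in hX.
have mk s : s \in val X -> h != s -> v \in val s -> exists S,
    [/\ center S = v, h \in val S, L2 X S, X != S & colr [set X; S] = kappa v s].
  move=> sX hs vs; exists (P2 h s).
  have Lhs : @Ladj _ e h s := LadjP hs vh vs.
  have hS : h \in val (P2 h s) by rewrite valP2 // in_set2 eqxx.
  have sS : s \in val (P2 h s) by rewrite valP2 // in_set2 eqxx orbT.
  have cS : center (P2 h s) = v := center_eq hS sS hs vh vs.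
  have XS : X != P2 h s by apply/negP => /eqP E0; rewrite E0 hS in hX.
  split => //; first exact: L2adjP XS sX sS.
  by rewrite (colr_edge XS sX sS) //; right; rewrite cS.
case Ta: (treeb a).
  have [S [c1 c2 c3 c4 c5]] := mk a aX ha va.
  exists S, (kappa v a); split => //; first by right.
  by left; exists a; split => //; [rewrite eq_sym|rewrite /kappa Ta].
case Tb: (treeb b).
  have [S [c1 c2 c3 c4 c5]] := mk b bX hb vb.
  exists S, (kappa v b); split => //; first by right.
  by left; exists b; split => //; [rewrite eq_sym|rewrite /kappa Tb].
have hab : extra v a != extra v b.
  by apply: extra_two va vb vh ab _ _ Th _ _; rewrite ?Ta ?Tb // eq_sym.
have ex x : extra v x = E1 \/ extra v x = E2 by rewrite /extra; case: ifP; [right|left].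
case: (eqVneq (extra v a) K0) => [ka|ka].
  have [S [c1 c2 c3 c4 c5]] := mk a aX ha va.
  by exists S, (kappa v a); split => //; [right|right; rewrite /kappa Ta].
have [S [c1 c2 c3 c4 c5]] := mk b bX hb vb.
exists S, (kappa v b); split => //; first by right.
right; rewrite /kappa Tb; move: hab ka.
case: (ex a) => ->; case: (ex b) => ->; case: HK0 => -> //; by rewrite ?eqxx.
Qed.

Lemma rc_main (X0 Y0 : V2) : exists p, rainbow_path L2 colr X0 Y0 p.
Proof.
case: (eqVneq X0 Y0) => [<-|XY]; first by exists [::]; apply: rb_nil.
case: (eqVneq (center X0) (center Y0)) => [cc|vw].
  by exists [:: Y0]; apply: rb_single => //; apply: same_center_adj.
set v := center X0 in vw *; set w := center Y0 in vw *.
have [pq lq uq _] := walk_spec (ltnSn (dist v + dist w)).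
move: pq lq uq; set q := walk _ v w => pq lq uq.
have Hq : q = walk (dist v + dist w).+1 v w by [].
case: q Hq pq lq uq => [|v1 q'] Hq pq lq uq.
  by rewrite /= in lq; rewrite lq eqxx in vw.
rewrite /= in lq.
have t01 : tedge v v1 by case/andP: pq.
have tk := path_last_tedge pq.
set pen := last v (belast v1 q') in tk.
have hX0 : center X0 \in val (E v v1) by apply: E_in1; apply: tedge_e.
have hY0 : center Y0 \in val (E pen (last v1 q')).
  by rewrite -/w -lq; apply: E_in2; apply: tedge_e.
have [S [KS [cS hS Spath KSok]]] := pre_piece hX0 (tedge_tree t01) (or_introl erefl).
have [F [KF [cF hF Fpath KFok]]] := pre_piece hY0 (tedge_tree tk) (or_intror erefl).
have cS' : center S = v by [].
have cF' : center F = last v1 q' by rewrite cF -/w lq.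
have [p [rp pc pFc pcol]] := through pq uq hS cS' hF cF'.
have [pS [rS vS cSc]] : exists pS, [/\ rainbow_path L2 colr X0 S pS,
    forall u, u \in X0 :: pS -> center u = v &
    forall k0, k0 \in edge_colours colr X0 pS -> k0 = KS].
  case: Spath => [SX|[LXS XS cXS]].
    exists [::]; split; first by rewrite SX; apply: rb_nil.
      by move=> u; rewrite inE => /eqP->.
    by [].
  exists [:: S]; split; first exact: rb_single.
    by move=> u; rewrite !inE => /orP[]/eqP->.
  by move=> k0; rewrite ec_cons inE => /eqP->.
have [pF [rF vF cFc]] : exists pF, [/\ rainbow_path L2 colr F Y0 pF,
    forall u, u \in pF -> u = Y0 /\ F != Y0 &
    forall k0, k0 \in edge_colours colr F pF -> k0 = KF].
  case: Fpath => [FY|[LYF YF cYF]].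
    exists [::]; split; first by rewrite FY; apply: rb_nil.
      by [].
    by [].
  exists [:: Y0]; split.
  - by apply: rb_single; [rewrite /L2adj Ladj_sym|rewrite eq_sym].
  - by move=> u; rewrite inE => /eqP->; rewrite eq_sym.
  - by move=> k0; rewrite ec_cons inE setUC => /eqP->.
have lastp : last S p = F by case/and4P: rp => _ /eqP.
have R1 : rainbow_path L2 colr S Y0 (p ++ pF).
  apply: (rb_cat rp rF).
    move=> u uSp /vF [uY FY]; move: (pFc u uSp); rewrite uY lq => /(_ erefl) FY'.
    by rewrite FY' eqxx in FY.
  move=> k0 /pcol [a [b [kab cab]]] /cFc kF.
  have tab := consec_tedge pq cab.
  case: KFok => [[t [Tt wt th kt]]|kt]; last first.
    by move: (col_E2 (E a b)); rewrite -kab kF kt eqxx.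
  have Et : E a b = t by apply: col_inj (tedge_tree tab) Tt _; rewrite -kab kF.
  move: wt; rewrite -Et mem_E ?tedge_e // -/w -lq => wab.
  have H2 : (a == last v1 q') || (b == last v1 q').
    by move: wab; rewrite !(eq_sym (last v1 q')).
  move/(consec_last uq cab): H2 => /andP[/eqP ea /eqP eb].
  by move: th; rewrite -Et ea eb -/pen eqxx.
exists (pS ++ (p ++ pF)); apply: (rb_cat rS R1).
  move=> u /vS cu; rewrite mem_cat => /orP[/pc|/vF [uY _]].
    by rewrite cu; case/andP: uq => /negP.
  by move: cu; rewrite uY => cw; move: vw; rewrite /w cw eqxx.
move=> k0 /cSc -> ; rewrite ec_cat lastp mem_cat => /orP[/pcol [a [b [kab cab]]]|/cFc kF].
  have tab := consec_tedge pq cab.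
  case: KSok => [[s [Ts vs sh ks]]|ks]; last first.
    by move: (col_E1 (tedge_tree tab)); rewrite -kab ks eqxx.
  have Es : E a b = s by apply: col_inj (tedge_tree tab) Ts _; rewrite -kab ks.
  move: vs; rewrite -Es mem_E ?tedge_e // => vab.
  have H2 : (a == v) || (b == v) by move: vab; rewrite !(eq_sym v).
  move/(consec_head uq cab): H2 => /andP[/eqP ea /eqP eb].
  by move: sh; rewrite -Es ea eb eqxx.
case: KSok => [[s [Ts vs sh ks]]|ks]; case: KFok => [[t [Tt wt th kt]]|kt].
- have st : s = t by apply: col_inj Ts Tt _; rewrite -ks -kt kF.
  subst t.
  have tvw : tedge v w by apply: (tree_tedge Ts).
  have Wq : walk (dist v + dist w).+1 v w = [:: w] := walk_single _ vw tvw.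
  rewrite Wq in Hq; case: Hq => ev1 eq'.
  have sE : s = E v v1.
    rewrite ev1; apply: (edge_eq eirr vw) => //.
    - exact: E_in1 (tedge_e tvw).
    - exact: E_in2 (tedge_e tvw).
  by rewrite sE eqxx in sh.
- by move: (col_E2 s); rewrite -ks kF kt eqxx.
- by move: (col_E1 Tt); rewrite -kt -kF ks eqxx.
- by move: E12; rewrite -ks -kt kF eqxx.
Qed.

End Tree.

Theorem corollary4p1 (T : finType) (e : rel T) :
  simple_graph e -> connected_graph e -> cubic e ->
  rc_le (@L2adj T e) #|T|.+1.
Proof.
move=> [esym eirr] econn ecub.
case: (pickP (fun _ : L2V e => true)) => [X0 _|none]; last first.
  by exists (fun _ => ord0) => x; move: (none x).
have [A [B [LAB _ EX]]] := edgeP (@Ladj_irr _ e) X0.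
have [x [y [_ _ EA]]] := edgeP eirr A.
exists (colr econn x) => X Y.
exact: (rc_main esym eirr econn x ecub A X0).
Qed.
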